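(* Let $c>0$, $d\ge2$, $m\ge0$, and let $\phi_k$ be a nontrivial real solution bounded on $[-1,1]$ of $$\big((1-\eta)(1+\eta)^{m+\frac d2}\phi_k'(\eta)\big)'+\Big(\alpha_k-\frac{c^2(1+\eta)}{8}\Big)(1+\eta)^{m+\frac d2-1}\phi_k(\eta)=0,\qquad \eta\in(-1,1).$$ If $\alpha_k>\frac{c^2}{4}$, then $$\sup_{\eta\in[a_{m,d},1]}|\phi_k(\eta)|=|\phi_k(1)|,\qquad a_{m,d}=\frac{2m+d-2}{2m+d}.$$
   Context: This is the radial equation of ball prolate spheroidal wave functions $\psi(x)=r^m\phi_k(2r^2-1)Y(\hat x)$, where $\alpha_k=\frac14(\chi^{(m)}_k(c)-m(m+d))$ and $\chi^{(m)}_k(c)$ is the corresponding eigenvalue of $\mathcal{L}_c=-\nabla\cdot(1-\|x\|^2)\nabla-\Delta_0+c^2\|x\|^2$. *)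

(* Defs.v *)
From Stdlib Require Import Reals.
From Coquelicot Require Import Coquelicot.
Open Scope R_scope.

Definition pexp (m d : nat) : R := INR m + INR d / 2.

Definition a_md (m d : nat) : R := (2 * INR m + INR d - 2) / (2 * INR m + INR d).

Definition radial_solution (c alpha : R) (m d : nat) (phi : R -> R) : Prop :=
  forall t, -1 < t < 1 ->
    ex_derive phi t /\
    is_derive (fun s => (1 - s) * Rpower (1 + s) (pexp m d) * Derive phi s) t
      (- ((alpha - c ^ 2 * (1 + t) / 8) * Rpower (1 + t) (pexp m d - 1) * phi t)).

(* Main.v *)
Require Import Defs.
From Stdlib Require Import Reals Lra.
From Coquelicot Require Import Coquelicot.
Open Scope R_scope.

Lemma mono_le (f df : R -> R) x y : x <= y ->
  (forall z, x <= z <= y -> is_derive f z (df z)) ->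
  (forall z, x <= z <= y -> 0 <= df z) -> f x <= f y.
Proof.
intros hxy hd hp. destruct (Req_dec x y) as [->|hne]; [lra|].
destruct (MVT_cor3 f df x y) as [z [h1 [h2 h3]]]; [lra| |].
- intros z h1 h2. apply is_derive_Reals. apply hd. lra.
- rewrite h3. assert (0 <= df z) by (apply hp; lra). nra.
Qed.

Lemma lip_le (f df : R -> R) x y K : x <= y ->
  (forall z, x <= z <= y -> is_derive f z (df z)) ->
  (forall z, x <= z <= y -> Rabs (df z) <= K) -> Rabs (f y - f x) <= K * (y - x).
Proof.
intros hxy hd hp. destruct (Req_dec x y) as [->|hne].
{ replace (f y - f y) with 0 by ring. rewrite Rabs_R0. lra. }
destruct (MVT_cor3 f df x y) as [z [h1 [h2 h3]]]; [lra| |].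
- intros z h1 h2. apply is_derive_Reals. apply hd. lra.
- rewrite h3. replace (f x + df z * (y - x) - f x) with (df z * (y - x)) by ring.
  rewrite Rabs_mult, (Rabs_pos_eq (y - x)) by lra.
  assert (Rabs (df z) <= K) by (apply hp; lra). nra.
Qed.

Lemma F_deriv (phi g : R->R) (p al c s dg : R) :
 -1 < s < 1 -> ex_derive phi s -> is_derive g s dg ->
 (1-s)*(al - c^2*(1+s)/8)*exp((2*p-1)*ln(1+s)) <> 0 ->
 g s * dg = - ((1-s)*(al - c^2*(1+s)/8)*exp((2*p-1)*ln(1+s))) * phi s * Derive phi s ->
 is_derive (fun x => phi x ^ 2 + g x ^ 2 / ((1-x)*(al - c^2*(1+x)/8)*exp((2*p-1)*ln(1+x)))) s
   (- g s ^2 * ((-(al - c^2*(1+s)/8) + (1-s)*(-(c^2/8)))*exp((2*p-1)*ln(1+s))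
      + (1-s)*(al - c^2*(1+s)/8)*((2*p-1)/(1+s))*exp((2*p-1)*ln(1+s)))
     / ((1-s)*(al - c^2*(1+s)/8)*exp((2*p-1)*ln(1+s)))^2).
Proof.
intros hs hphi hg hH hid.
assert (hgd : ex_derive g s) by (exists dg; exact hg).
auto_derive.
- repeat split; auto; lra.
- change (Derive (fun x => g x) s) with (Derive g s); change (Derive (fun x => phi x) s) with (Derive phi s); rewrite (is_derive_unique g s dg hg).
  set (H := (1-s)*(al - c^2*(1+s)/8)*exp((2*p-1)*ln(1+s))) in *.
  match goal with |- ?L = ?R =>
    assert (L - R = (g s * dg + H * phi s * Derive phi s) * (2 / H)) end.
  { assert (h1 : 1 - s <> 0) by lra.
    assert (h2 : al - c^2*(1+s)/8 <> 0).
    { intro e. apply hH. unfold H. rewrite e. ring. }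
    assert (h3 : exp ((2*p-1)*ln(1+s)) <> 0) by (apply Rgt_not_eq, exp_pos).
    unfold H. field. repeat split; auto; lra. }
  rewrite hid in H0. lra.
Qed.

Lemma blow (phi : R -> R) (p t dl sg M : R) :
 0 <= t < 1 -> 0 < dl -> 0 <= p -> (sg = 1 \/ sg = -1) ->
 (forall s, t <= s < 1 -> ex_derive phi s) ->
 (forall s, t <= s < 1 -> dl <= sg * ((1-s) * Rpower (1+s) p * Derive phi s)) ->
 (forall s, t <= s <= 1 -> Rabs (phi s) <= M) -> False.
Proof.
intros ht hdl hp hsg hex hlow hM.
set (P2 := Rpower 2 p).
assert (hP2 : 0 < P2) by (unfold P2, Rpower; apply exp_pos).
set (gm := dl / P2).
assert (hgm : 0 < gm) by (unfold gm; apply Rdiv_lt_0_compat; lra).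
assert (hM0 : 0 <= M) by (pose proof (hM t ltac:(lra)); pose proof (Rabs_pos (phi t)); lra).
set (N := 2 * M / gm + 1).
assert (hN : 0 < N) by (unfold N; assert (0 <= 2 * M / gm) by (apply Rdiv_le_0_compat; lra); lra).
set (s := 1 - (1 - t) * exp (- N)).
assert (he1 : exp (- N) < 1) by (rewrite <- exp_0; apply exp_increasing; lra).
assert (he0 : 0 < exp (- N)) by apply exp_pos.
assert (hs : t <= s < 1) by (unfold s; split; nra).
assert (hmono : sg * phi t + gm * ln (1 - t) <= sg * phi s + gm * ln (1 - s)).
{ apply (mono_le (fun x => sg * phi x + gm * ln (1 - x))
     (fun x => sg * Derive phi x - gm / (1 - x))); [lra| |].
  - intros z hz. assert (hz' : ex_derive phi z) by (apply hex; lra).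
    auto_derive.
    + split; [exact hz'|split; [lra|exact I]].
    + change (Derive (fun x => phi x) z) with (Derive phi z). field. lra.
  - intros z hz.
    assert (hz1 : t <= z < 1) by lra.
    pose proof (hlow z hz1) as hl.
    set (Pz := Rpower (1 + z) p) in hl.
    assert (hPz : 0 < Pz) by (unfold Pz, Rpower; apply exp_pos).
    assert (hPzle : Pz <= P2) by (unfold Pz, P2; apply Rle_Rpower_l; lra).
    set (X := sg * Derive phi z).
    assert (hX : dl <= X * ((1 - z) * Pz)) by (unfold X; replace (sg * Derive phi z * ((1 - z) * Pz)) with (sg * ((1 - z) * Pz * Derive phi z)) by ring; exact hl).
    assert (hY : 0 < (1 - z) * Pz) by (apply Rmult_lt_0_compat; lra).
    assert (hXp : 0 < X).
    { destruct (Rle_lt_dec X 0) as [h|h]; [|exact h].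
      assert (X * ((1 - z) * Pz) <= 0) by (apply Rmult_le_0_r; lra). lra. }
    assert (hX2 : dl <= X * ((1 - z) * P2)).
    { assert (X * ((1 - z) * Pz) <= X * ((1 - z) * P2)).
      { apply Rmult_le_compat_l; [lra|]. apply Rmult_le_compat_l; lra. }
      lra. }
    assert (E : X - gm / (1 - z) = (X * ((1 - z) * P2) - dl) * / ((1 - z) * P2))
      by (unfold gm; field; lra).
    rewrite E. apply Rmult_le_pos; [lra|]. left. apply Rinv_0_lt_compat. nra. }
assert (hln : ln (1 - s) = ln (1 - t) + - N).
{ unfold s. replace (1 - (1 - (1 - t) * exp (- N))) with ((1 - t) * exp (- N)) by ring.
  rewrite ln_mult by lra. rewrite ln_exp. reflexivity. }
rewrite hln in hmono.
assert (hgN : gm * N = 2 * M + gm) by (unfold N; field; lra).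
assert (hbs : sg * phi s <= M).
{ pose proof (hM s ltac:(lra)). pose proof (Rle_abs (phi s)). pose proof (Rle_abs (- phi s)).
  rewrite Rabs_Ropp in *. destruct hsg as [-> | ->]; lra. }
assert (hbt : - M <= sg * phi t).
{ pose proof (hM t ltac:(lra)). pose proof (Rle_abs (phi t)). pose proof (Rle_abs (- phi t)).
  rewrite Rabs_Ropp in *. destruct hsg as [-> | ->]; lra. }
nra.
Qed.

Lemma cont_at1 (phi : R -> R) :
  filterlim phi (within (fun s => -1 <= s <= 1) (locally 1)) (locally (phi 1)) ->
  forall eps, 0 < eps -> exists del, 0 < del /\
    forall s, 1 - del < s <= 1 -> -1 <= s -> Rabs (phi s - phi 1) < eps.
Proof.
intros hf eps heps.
destruct (proj1 (filterlim_locally _ _) hf (mkposreal eps heps)) as [del hdel].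
exists del. split; [apply cond_pos|].
intros s hs hs'.
assert (hb : ball 1 del s).
{ apply (proj2 (ball_Rabs 1 s del)) || idtac.
  unfold ball; simpl; unfold AbsRing_ball, abs, minus, plus, opp; simpl.
  rewrite Rabs_left1; lra. }
specialize (hdel s hb ltac:(lra)).
revert hdel. unfold ball; simpl; unfold AbsRing_ball, abs, minus, plus, opp; simpl. auto.
Qed.

Lemma Hp_nonpos p al c s : 1 <= p -> (p-1)/p <= s < 1 -> 0 < al - c^2*(1+s)/8 ->
  (-(al - c^2*(1+s)/8) + (1-s)*(-(c^2/8)))*exp((2*p-1)*ln(1+s))
   + (1-s)*(al - c^2*(1+s)/8)*((2*p-1)/(1+s))*exp((2*p-1)*ln(1+s)) <= 0.
Proof.
intros hp hs hb.
assert (hs0 : 0 <= s).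
{ assert (0 <= (p-1)/p) by (apply Rdiv_le_0_compat; lra). lra. }
assert (hps : p - 1 <= p * s).
{ assert ((p-1)/p * p = p - 1) by (field; lra). nra. }
set (E := exp((2*p-1)*ln(1+s))). set (b := al - c^2*(1+s)/8).
assert (hE : 0 < E) by apply exp_pos.
assert (hb2 : 0 < b) by exact hb.
replace ((-b + (1-s)*(-(c^2/8)))*E + (1-s)*b*((2*p-1)/(1+s))*E)
  with (E * (b * (2*p - 2 - 2*p*s) * / (1+s) + -((1-s)*c^2/8))) by (field; lra).
assert (h1 : b * (2*p - 2 - 2*p*s) * / (1+s) <= 0).
{ assert (0 < / (1+s)) by (apply Rinv_0_lt_compat; lra). 
  assert (0 <= b * (2*p*s - 2*p + 2)) by (apply Rmult_le_pos; lra).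
  assert (0 <= b * (2*p*s - 2*p + 2) * / (1+s)) by (apply Rmult_le_pos; lra). nra. }
assert (h2 : 0 <= (1-s)*c^2/8) by (assert (0 <= c^2) by nra; nra).
nra.
Qed.

Theorem lemma3p6 (c alpha : R) (d m : nat) (phi : R -> R) :
  0 < c -> (2 <= d)%nat ->
  radial_solution c alpha m d phi ->
  (forall t, -1 <= t <= 1 -> filterlim phi (within (fun s => -1 <= s <= 1) (locally t)) (locally (phi t))) ->
  (exists M, forall t, -1 <= t <= 1 -> Rabs (phi t) <= M) ->
  (exists t, -1 < t < 1 /\ phi t <> 0) ->
  c ^ 2 / 4 < alpha ->
  is_lub (fun y => exists t, a_md m d <= t <= 1 /\ y = Rabs (phi t)) (Rabs (phi 1)).
Proof.
intros hc hd hsol hcont [M hM] _ hal.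
unfold radial_solution in hsol.
set (p := pexp m d) in *.
assert (hm0 : 0 <= INR m) by apply pos_INR.
assert (hd2 : 2 <= INR d) by (replace 2 with (INR 2) by (simpl; ring); apply le_INR; exact hd).
assert (hp : 1 <= p) by (unfold p, pexp; lra).
assert (ha : a_md m d = (p - 1) / p) by (unfold a_md, p, pexp; field; lra).
assert (ha1 : (p - 1) / p = 1 - / p) by (field; lra).
assert (hip : 0 < / p) by (apply Rinv_0_lt_compat; lra).
assert (ha0 : 0 <= (p - 1) / p) by (apply Rdiv_le_0_compat; lra).
assert (key : forall t0, (p-1)/p <= t0 < 1 -> phi t0 ^ 2 <= phi 1 ^ 2).
{ intros t0 ht0.
  destruct (Rle_lt_dec (phi t0 ^ 2) (phi 1 ^ 2)) as [hle|hlt]; [exact hle|exfalso].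
  set (e := phi t0 ^ 2 - phi 1 ^ 2).
  assert (he : 0 < e) by (unfold e; lra).
  set (b0 := alpha - c ^ 2 / 4).
  assert (hb0 : 0 < b0) by (unfold b0; lra).
  assert (hc2 : 0 < c ^ 2) by nra.
  assert (hM0 : 0 <= M) by (pose proof (hM 1 ltac:(lra)); pose proof (Rabs_pos (phi 1)); lra).
  pose (g := fun s => (1 - s) * Rpower (1 + s) p * Derive phi s).
  pose (Hx := fun s => (1-s)*(alpha - c^2*(1+s)/8)*exp((2*p-1)*ln(1+s))).
  assert (hbeta : forall s, 0 <= s < 1 -> b0 <= alpha - c^2*(1+s)/8).
  { intros s hs. unfold b0. nra. }
  assert (hE : forall s, 0 <= s < 1 -> 1 <= exp((2*p-1)*ln(1+s))).
  { intros s hs. pose proof (exp_ineq1_le ((2*p-1)*ln(1+s))).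
    assert (0 <= ln (1 + s)) by (rewrite <- ln_1; apply ln_le; lra). nra. }
  assert (hHlow : forall s, 0 <= s < 1 -> b0 * (1 - s) <= Hx s).
  { intros s hs. unfold Hx. pose proof (hbeta s hs). pose proof (hE s hs).
    assert (b0 * (1 - s) <= (1 - s) * (alpha - c ^ 2 * (1 + s) / 8)) by nra.
    assert (0 <= (1 - s) * (alpha - c ^ 2 * (1 + s) / 8)) by nra. nra. }
  assert (hHpos : forall s, 0 <= s < 1 -> 0 < Hx s).
  { intros s hs. pose proof (hHlow s hs). nra. }
  assert (hg : forall s, -1 < s < 1 ->
    is_derive g s (- ((alpha - c ^ 2 * (1 + s) / 8) * Rpower (1 + s) (p - 1) * phi s))).
  { intros s hs. exact (proj2 (hsol s hs)). }
  assert (hid : forall s, -1 < s < 1 ->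
    g s * (- ((alpha - c ^ 2 * (1 + s) / 8) * Rpower (1 + s) (p - 1) * phi s))
    = - Hx s * phi s * Derive phi s).
  { intros s hs. unfold g, Hx, Rpower.
    replace ((2 * p - 1) * ln (1 + s)) with (p * ln (1 + s) + (p - 1) * ln (1 + s)) by ring.
    rewrite exp_plus. ring. }
  pose (Fl := fun x => phi x ^ 2 + g x ^ 2 / ((1-x)*(alpha - c^2*(1+x)/8)*exp((2*p-1)*ln(1+x)))).
  assert (hFmono : forall s, t0 <= s < 1 -> Fl t0 <= Fl s).
  { intros s hs.
    apply (mono_le Fl (fun s => - g s ^2 * ((-(alpha - c^2*(1+s)/8) + (1-s)*(-(c^2/8)))*exp((2*p-1)*ln(1+s))
      + (1-s)*(alpha - c^2*(1+s)/8)*((2*p-1)/(1+s))*exp((2*p-1)*ln(1+s)))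
     / ((1-s)*(alpha - c^2*(1+s)/8)*exp((2*p-1)*ln(1+s)))^2)); [lra| |].
    - intros z hz. assert (hz' : -1 < z < 1) by lra.
      apply (F_deriv phi g p alpha c z _ hz' (proj1 (hsol z hz')) (hg z hz')).
      + pose proof (hHpos z ltac:(lra)). unfold Hx in *. lra.
      + apply hid; exact hz'.
    - intros z hz.
      pose proof (Hp_nonpos p alpha c z hp ltac:(lra) ltac:(pose proof (hbeta z ltac:(lra)); lra)) as hH'.
      pose proof (hHpos z ltac:(lra)) as hH. unfold Hx in hH.
      set (H' := (-(alpha - c^2*(1+z)/8) + (1-z)*(-(c^2/8)))*exp((2*p-1)*ln(1+z))
        + (1-z)*(alpha - c^2*(1+z)/8)*((2*p-1)/(1+z))*exp((2*p-1)*ln(1+z))) in *.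
      set (HH := (1-z)*(alpha - c^2*(1+z)/8)*exp((2*p-1)*ln(1+z))) in *.
      unfold Rdiv. replace (- g z ^ 2 * H' * / HH ^ 2) with (g z ^ 2 * (- H') * / HH ^ 2) by ring.
      apply Rmult_le_pos; [apply Rmult_le_pos; [apply pow2_ge_0|lra]|].
      left. apply Rinv_0_lt_compat. nra. }
  assert (hF0 : phi t0 ^ 2 <= Fl t0).
  { unfold Fl. pose proof (hHpos t0 ltac:(lra)) as hH. unfold Hx in hH.
    assert (0 <= g t0 ^ 2 / ((1-t0)*(alpha - c^2*(1+t0)/8)*exp((2*p-1)*ln(1+t0))))
      by (apply Rdiv_le_0_compat; [apply pow2_ge_0|lra]). lra. }
  set (eta := Rmin 1 (e / (2 * (2 * Rabs (phi 1) + 1)))).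
  assert (hA : 0 <= Rabs (phi 1)) by apply Rabs_pos.
  assert (heta : 0 < eta).
  { unfold eta. apply Rmin_pos; [lra|]. apply Rdiv_lt_0_compat; lra. }
  assert (heta1 : eta <= 1) by apply Rmin_l.
  assert (heta2 : eta * (2 * Rabs (phi 1) + 1) <= e / 2).
  { assert (eta <= e / (2 * (2 * Rabs (phi 1) + 1))) by apply Rmin_r.
    assert (e / (2 * (2 * Rabs (phi 1) + 1)) * (2 * Rabs (phi 1) + 1) = e / 2) by (field; lra).
    nra. }
  destruct (cont_at1 phi (hcont 1 ltac:(lra)) eta heta) as [del [hdel hcl]].
  assert (hclose : forall s, 1 - del < s < 1 -> 0 <= s -> phi s ^ 2 < phi 1 ^ 2 + e / 2).
  { intros s hs hs0. pose proof (hcl s ltac:(lra) ltac:(lra)) as hu.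
    set (u := phi s - phi 1) in hu.
    replace (phi s) with (phi 1 + u) by (unfold u; ring).
    pose proof (Rle_abs (2 * u * phi 1)) as h1.
    rewrite !Rabs_mult, (Rabs_pos_eq 2) in h1 by lra.
    assert (u ^ 2 = Rabs u ^ 2) by (rewrite <- (pow2_abs u); reflexivity).
    pose proof (Rabs_pos u). nra. }
  set (s1 := Rmax t0 (1 - del / 2)).
  assert (hs1a : t0 <= s1) by apply Rmax_l.
  assert (hs1b : 1 - del / 2 <= s1) by apply Rmax_r.
  assert (hs1c : s1 < 1) by (apply Rmax_lub_lt; lra).
  set (ep := e * b0 / 2).
  assert (hep : 0 < ep) by (unfold ep; nra).
  assert (hgbig : forall s, s1 <= s < 1 -> ep * (1 - s) < g s ^ 2).
  { intros s hs. pose proof (hFmono s ltac:(lra)). pose proof (hclose s ltac:(lra) ltac:(lra)).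
    pose proof (hHlow s ltac:(lra)). pose proof (hHpos s ltac:(lra)).
    unfold Fl in *. fold (Hx s) in *.
    assert (hq : e / 2 < g s ^ 2 / Hx s) by (unfold e in *; lra).
    assert (g s ^ 2 = g s ^ 2 / Hx s * Hx s) by (field; lra).
    unfold ep. nra. }
  set (K := (Rabs alpha + c ^ 2) * Rpower 2 (p - 1) * M + 1).
  assert (hR2 : 0 < Rpower 2 (p - 1)) by (unfold Rpower; apply exp_pos).
  assert (hK : 0 < K).
  { unfold K. pose proof (Rabs_pos alpha).
    assert (0 <= (Rabs alpha + c ^ 2) * Rpower 2 (p - 1) * M)
      by (apply Rmult_le_pos; [apply Rmult_le_pos|]; lra). lra. }
  assert (hlip : forall x y, s1 <= x <= y -> y < 1 -> Rabs (g y - g x) <= K * (y - x)).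
  { intros x y hxy hy.
    apply (lip_le g (fun z => - ((alpha - c ^ 2 * (1 + z) / 8) * Rpower (1 + z) (p - 1) * phi z))); [lra| |].
    - intros z hz. apply hg. lra.
    - intros z hz. rewrite Rabs_Ropp, !Rabs_mult.
      assert (hb1 : Rabs (alpha - c ^ 2 * (1 + z) / 8) <= Rabs alpha + c ^ 2).
      { apply Rabs_le. pose proof (Rle_abs alpha). pose proof (Rle_abs (- alpha)).
        rewrite Rabs_Ropp in *. split; nra. }
      assert (hb2 : Rabs (Rpower (1 + z) (p - 1)) <= Rpower 2 (p - 1)).
      { rewrite Rabs_pos_eq by (unfold Rpower; left; apply exp_pos).
        apply Rle_Rpower_l; lra. }
      assert (hb3 : Rabs (phi z) <= M) by (apply hM; lra).
      assert (Rabs (alpha - c ^ 2 * (1 + z) / 8) * Rabs (Rpower (1 + z) (p - 1)) * Rabs (phi z)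
        <= (Rabs alpha + c ^ 2) * Rpower 2 (p - 1) * M).
      { apply Rmult_le_compat; try apply Rabs_pos.
        - apply Rmult_le_pos; apply Rabs_pos.
        - apply Rmult_le_compat; try apply Rabs_pos; lra.
        - exact hb3. }
      unfold K. lra. }
  set (t := Rmax s1 (1 - ep / (8 * K ^ 2))).
  assert (hta : s1 <= t) by apply Rmax_l.
  assert (htb : 1 - ep / (8 * K ^ 2) <= t) by apply Rmax_r.
  assert (hK2 : 0 < 8 * K ^ 2) by nra.
  assert (hepK : 0 < ep / (8 * K ^ 2)) by (apply Rdiv_lt_0_compat; lra).
  assert (htc : t < 1) by (apply Rmax_lub_lt; lra).
  assert (ht8 : 8 * K ^ 2 * (1 - t) <= ep).
  { assert (ep / (8 * K ^ 2) * (8 * K ^ 2) = ep) by (field; lra). nra. }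
  assert (hgt : 2 * K * (1 - t) < Rabs (g t)).
  { pose proof (hgbig t ltac:(lra)).
    assert ((2 * K * (1 - t)) ^ 2 < g t ^ 2) by nra.
    rewrite <- (Rabs_pos_eq (2 * K * (1 - t))) by nra.
    apply Rsqr_lt_abs_0. unfold Rsqr. nra. }
  assert (hsg : exists sg, (sg = 1 \/ sg = -1) /\ sg * g t = Rabs (g t)).
  { destruct (Rle_lt_dec 0 (g t)).
    - exists 1. split; [left; reflexivity|]. rewrite Rabs_pos_eq; lra.
    - exists (-1). split; [right; reflexivity|]. rewrite Rabs_left; lra. }
  destruct hsg as [sg [hsg1 hsg2]].
  apply (blow phi p t (Rabs (g t) / 2) sg M).
  + split; lra.
  + assert (0 < 2 * K * (1 - t)) by (apply Rmult_lt_0_compat; lra). lra.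
  + lra.
  + exact hsg1.
  + intros s hs. apply (hsol s). lra.
  + intros s hs. change ((1 - s) * Rpower (1 + s) p * Derive phi s) with (g s).
    pose proof (hlip t s ltac:(lra) ltac:(lra)) as hl.
    pose proof (Rle_abs (g s - g t)). pose proof (Rle_abs (- (g s - g t))).
    rewrite Rabs_Ropp in *.
    replace (sg * g s) with (sg * g t + sg * (g s - g t)) by ring.
    destruct hsg1 as [-> | ->]; nra.
  + intros s hs. apply hM. lra. }
assert (claim : forall t, (p-1)/p <= t <= 1 -> Rabs (phi t) <= Rabs (phi 1)).
{ intros t ht. destruct (Req_dec t 1) as [->|hne]; [lra|].
  apply Rsqr_le_abs_0. unfold Rsqr. pose proof (key t ltac:(lra)). nra. }
rewrite ha. split.
- intros y [t [ht ->]]. apply claim; lra.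
- intros b hb. apply hb. exists 1. split; [lra|reflexivity].
Qed.
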